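(* Let $\mathcal{G}=(\mathcal{V},\mathcal{E},\mathcal{W})$ be an undirected weighted graph in which exactly one edge $e_-=(u,v)$ has negative weight and all other edges have positive weight. Let $\mathcal{G}_+=(\mathcal{V},\mathcal{E}\setminus\{e_-\},\mathcal{W})$ and assume $\mathcal{G}_+$ is connected. Then $L(\mathcal{G})$ is positive semi-definite if and only if $|\mathcal{W}(e_-)|\le \mathcal{R}_{uv}(\mathcal{G}_+)^{-1}$.
   Context: Weights $\mathcal{W}:\mathcal{E}\to\mathbb{R}\setminus\{0\}$; $W$ is the diagonal weight matrix; with an arbitrary edge orientation the incidence matrix $E$ has in the column of edge $(i,j)$ entry $+1$ in row $i$, $-1$ in row $j$, $0$ elsewhere; $L(\mathcal{G})=EWE^T$. For a weighted graph $\mathcal{H}$ on $\mathcal{V}$, the effective resistance between nodes $u,v$ is $\mathcal{R}_{uv}(\mathcal{H})=(\mathbf{e}_u-\mathbf{e}_v)^TL^{\dagger}(\mathcal{H})(\mathbf{e}_u-\mathbf{e}_v)$, where $L^{\dagger}$ is the Moore–Penrose pseudo-inverse and $\mathbf{e}_u$ is the standard basis vector of node $u$. *)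

(* Defs.v *)
From HB Require Import structures.
From mathcomp Require Import all_boot all_order all_algebra.
From Stdlib Require Import ClassicalEpsilon.
Set Implicit Arguments. Unset Strict Implicit. Unset Printing Implicit Defensive.
Import Order.TTheory GRing.Theory Num.Theory.
Local Open Scope ring_scope.

(* A weighted graph on vertex set 'I_n with m edges; edge k joins src k and
   dst k (arbitrary orientation) and has weight wt k. *)

Definition incidence (R : ringType) (n m : nat) (src dst : 'I_m -> 'I_n)
  : 'M[R]_(n, m) :=
  \matrix_(i < n, k < m) ((i == src k)%:R - (i == dst k)%:R).

Definition laplacian (R : ringType) (n m : nat) (src dst : 'I_m -> 'I_n)
  (wt : 'I_m -> R) : 'M[R]_n :=
  incidence R src dst *m diag_mx (\row_k wt k) *m (incidence R src dst)^T.

Definition simple_graph (n m : nat) (src dst : 'I_m -> 'I_n) : Prop :=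
  (forall k, src k != dst k) /\
  (forall k l, k != l ->
     ~ ((src k == src l) && (dst k == dst l) || (src k == dst l) && (dst k == src l))).

Definition adj (n m : nat) (src dst : 'I_m -> 'I_n) : rel 'I_n :=
  fun i j => [exists k, ((src k == i) && (dst k == j)) || ((src k == j) && (dst k == i))].

Definition connected_graph (n m : nat) (src dst : 'I_m -> 'I_n) : Prop :=
  forall i j, connect (adj src dst) i j.

(* Positive semi-definite (for the symmetric matrices considered here). *)
Definition psd (R : numDomainType) (n : nat) (A : 'M[R]_n) : Prop :=
  forall x : 'cV[R]_n, 0 <= (x^T *m A *m x) 0 0.

(* Moore–Penrose pseudo-inverse (real case: transpose = conjugate transpose). *)
Definition is_MP_inverse (R : ringType) (n : nat) (A X : 'M[R]_n) : Prop :=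
  [/\ A *m X *m A = A, X *m A *m X = X, (A *m X)^T = A *m X & (X *m A)^T = X *m A].

Definition pinv (R : ringType) (n : nat) (A : 'M[R]_n) : 'M[R]_n :=
  epsilon (inhabits A) (is_MP_inverse A).

Definition basis_vec (R : ringType) (n : nat) (u : 'I_n) : 'cV[R]_n :=
  \col_i (i == u)%:R.

Definition eff_res (R : ringType) (n m : nat) (src dst : 'I_m -> 'I_n)
  (wt : 'I_m -> R) (u v : 'I_n) : R :=
  let b := basis_vec R u - basis_vec R v in
  (b^T *m pinv (laplacian src dst wt) *m b) 0 0.

(* Main.v *)
Require Import Defs.
From HB Require Import structures.
From mathcomp Require Import all_boot all_order all_algebra.
From Stdlib Require Import ClassicalEpsilon.
From mathcomp Require Import ring lra.
Set Implicit Arguments. Unset Strict Implicit. Unset Printing Implicit Defensive.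
Import Order.TTheory GRing.Theory Num.Theory.
Local Open Scope ring_scope.

Lemma sum_pick (R : ringType) n (u : 'I_n) (F : 'I_n -> R) :
  \sum_i (i == u)%:R * F i = F u.
Proof.
rewrite (bigD1 u) //= eqxx mul1r big1 ?addr0 // => i /negbTE ->; by rewrite mul0r.
Qed.

Lemma incT (R : ringType) n m (s d : 'I_m -> 'I_n) (x : 'cV[R]_n) k :
  ((incidence R s d)^T *m x) k 0 = x (s k) 0 - x (d k) 0.
Proof.
rewrite mxE.
under eq_bigr => i _ do rewrite !mxE mulrBl.
by rewrite sumrB !sum_pick.
Qed.

Lemma basisT (R : ringType) n (u : 'I_n) (x : 'cV[R]_n) :
  ((basis_vec R u)^T *m x) 0 0 = x u 0.
Proof.
rewrite mxE; under eq_bigr => i _ do rewrite !mxE.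
by rewrite sum_pick.
Qed.

Definition dd (R : ringType) n m (s d : 'I_m -> 'I_n) (x : 'cV[R]_n) k :=
  x (s k) 0 - x (d k) 0.

Definition Bq (R : ringType) n m (s d : 'I_m -> 'I_n) (w : 'I_m -> R) (y x : 'cV[R]_n) :=
  \sum_k w k * (dd s d y k * dd s d x k).

Lemma bil (R : comRingType) n m (s d : 'I_m -> 'I_n) (w : 'I_m -> R) (y x : 'cV[R]_n) :
  (y^T *m laplacian s d w *m x) 0 0 = Bq s d w y x.
Proof.
rewrite /laplacian !mulmxA -[y^T *m _]trmxK trmx_mul trmxK.
rewrite -mulmxA mxE /Bq; apply: eq_bigr => k _.
rewrite mul_mx_diag mxE [X in X * _ * _]mxE incT incT mxE /dd; ring.
Qed.

Lemma lap_sym (R : comRingType) n m (s d : 'I_m -> 'I_n) (w : 'I_m -> R) :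
  (laplacian s d w)^T = laplacian s d w.
Proof. by rewrite /laplacian !trmx_mul tr_diag_mx trmxK mulmxA. Qed.
Lemma Bq_ge0 (R : realFieldType) n m (s d : 'I_m -> 'I_n) (w : 'I_m -> R) x :
  (forall k, 0 < w k) -> 0 <= Bq s d w x x.
Proof.
move=> hw; apply: sumr_ge0 => k _; apply: mulr_ge0; first exact: ltW.
by rewrite -expr2 sqr_ge0.
Qed.

Lemma Bq_eq0 (R : realFieldType) n m (s d : 'I_m -> 'I_n) (w : 'I_m -> R) x :
  (forall k, 0 < w k) -> Bq s d w x x = 0 -> forall k, dd s d x k = 0.
Proof.
move=> hw /psumr_eq0P H k.
have /H /(_ k isT) : forall k, true -> 0 <= w k * (dd s d x k * dd s d x k).
  by move=> j _; apply: mulr_ge0; [exact: ltW | rewrite -expr2; exact: sqr_ge0].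
move=> /eqP; rewrite mulf_eq0 (gt_eqF (hw k)) /= -expr2 sqrf_eq0 => /eqP //.
Qed.

Lemma const_conn (R : ringType) n m (s d : 'I_m -> 'I_n) (x : 'cV[R]_n) :
  connected_graph s d -> (forall k, dd s d x k = 0) -> forall i j, x i 0 = x j 0.
Proof.
move=> hc hd i j.
have hcl : closed (adj s d) [pred l | x l 0 == x i 0].
  move=> a b /existsP [k /orP [] /andP [/eqP <- /eqP <-]];
  have := hd k; rewrite /dd => /eqP; rewrite subr_eq0 !inE => /eqP ->; by [].
have := closed_connect hcl (hc i j); rewrite !inE eqxx => /esym /eqP.
by [].
Qed.

Lemma dd_lin (R : comRingType) n m (s d : 'I_m -> 'I_n) (x y : 'cV[R]_n) t k :
  dd s d (x - t *: y) k = dd s d x k - t * dd s d y k.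
Proof. rewrite /dd !mxE; ring. Qed.

Lemma Bq_expand (R : comRingType) n m (s d : 'I_m -> 'I_n) (w : 'I_m -> R) x y t :
  Bq s d w (x - t *: y) (x - t *: y) =
  Bq s d w x x - t * (2 * Bq s d w y x) + t ^+ 2 * Bq s d w y y.
Proof.
rewrite /Bq mulr_sumr mulr_sumr mulr_sumr -sumrB -big_split /=.
apply: eq_bigr => k _; rewrite !dd_lin; ring.
Qed.

Lemma Bq_split (R : comRingType) n m (s d : 'I_m.+1 -> 'I_n) (w : 'I_m.+1 -> R) k0 x :
  Bq s d w x x = w k0 * (dd s d x k0 * dd s d x k0) +
    Bq (fun j => s (lift k0 j)) (fun j => d (lift k0 j)) (fun j => w (lift k0 j)) x x.
Proof. by rewrite /Bq (bigD1_ord k0) //=. Qed.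
Lemma incTM (R : ringType) n m p (s d : 'I_m -> 'I_n) (X : 'M[R]_(n, p)) k j :
  ((incidence R s d)^T *m X) k j = X (s k) j - X (d k) j.
Proof.
rewrite mxE.
under eq_bigr => i _ do rewrite !mxE mulrBl.
by rewrite sumrB !sum_pick.
Qed.

Lemma lapJ (R : comRingType) n m (s d : 'I_m -> 'I_n) (w : 'I_m -> R) :
  laplacian s d w *m const_mx 1 = 0 :> 'M[R]_n.
Proof.
have E0 : (incidence R s d)^T *m (const_mx 1 : 'M[R]_n) = 0.
  by apply/matrixP => k j; rewrite incTM !mxE subrr.
by rewrite /laplacian -mulmxA E0 mulmx0.
Qed.

Lemma JlapJ (R : comRingType) n m (s d : 'I_m -> 'I_n) (w : 'I_m -> R) :
  const_mx 1 *m laplacian s d w = 0 :> 'M[R]_n.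
Proof.
by apply: trmx_inj; rewrite trmx_mul lap_sym trmx_const lapJ trmx0.
Qed.

Lemma JJ (R : comRingType) n :
  (const_mx 1 : 'M[R]_n) *m (const_mx 1 : 'M[R]_n) = n%:R *: const_mx 1.
Proof.
apply/matrixP => i j; rewrite !mxE.
under eq_bigr => l _ do rewrite !mxE mulr1.
by rewrite sumr_const card_ord mulr1.
Qed.

Lemma vJv (R : comRingType) n (v : 'rV[R]_n) :
  (v *m const_mx 1 *m v^T) 0 0 = (\sum_i v 0 i) ^+ 2.
Proof.
rewrite mxE expr2 mulr_sumr; apply: eq_bigr => l _.
rewrite [v^T _ _]mxE; congr (_ * _); rewrite mxE; apply: eq_bigr => i _; by rewrite mxE mulr1.
Qed.

Lemma ent_add (R : ringType) p q (A B : 'M[R]_(p, q)) i k : (A + B) i k = A i k + B i k.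
Proof. by rewrite mxE. Qed.
Lemma ent_scale (R : ringType) p q (a : R) (A : 'M[R]_(p, q)) i k : (a *: A) i k = a * A i k.
Proof. by rewrite mxE. Qed.

Lemma MP_exists (R : realFieldType) n m (s d : 'I_m -> 'I_n) (w : 'I_m -> R) :
  (0 < n)%N -> (forall k, 0 < w k) -> connected_graph s d ->
  exists X, is_MP_inverse (laplacian s d w) X.
Proof.
move=> n0 hw hc.
set L := laplacian s d w.
set J : 'M[R]_n := const_mx 1.
set j : R := n%:R^-1.
have nz : (n%:R : R) != 0 by rewrite pnatr_eq0 -lt0n.
have jn : j * n%:R = 1 by rewrite /j mulVf.
set M := L + j *: J.
have LJ : L *m J = 0 by exact: lapJ.
have JL : J *m L = 0 by exact: JlapJ.
have JJ' : J *m J = n%:R *: J by exact: JJ.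
have MJ : M *m J = J by rewrite mulmxDl LJ add0r -scalemxAl JJ' scalerA jn scale1r.
have JM : J *m M = J by rewrite mulmxDr JL add0r -scalemxAr JJ' scalerA jn scale1r.
have Munit : M \in unitmx.
  rewrite unitmxE unitfE; apply/negP => /det0P [v vn0 vM].
  have q0 : (v *m M *m v^T) 0 0 = 0 by rewrite vM mul0mx mxE.
  rewrite mulmxDr mulmxDl -scalemxAr -scalemxAl ent_add ent_scale vJv in q0.
  rewrite -{1}(trmxK v) bil in q0.
  move/eqP: q0; rewrite paddr_eq0; last first.
  - by apply: mulr_ge0; [rewrite invr_ge0 ler0n | exact: sqr_ge0].
  - exact: Bq_ge0.
  case/andP => /eqP /(Bq_eq0 hw) hd /eqP hS.
  have hcst := const_conn hc hd.
  have i0 : 'I_n := Ordinal n0.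
  have hsum : \sum_i v 0 i = n%:R * v 0 i0.
    rewrite mulr_natl -[n in _ *+ n]card_ord -sumr_const.
    by apply: eq_bigr => i _; have := hcst i i0; rewrite !mxE.
  move/eqP: hS; rewrite hsum mulf_eq0 invr_eq0 (negbTE nz) /= sqrf_eq0 mulf_eq0 (negbTE nz) /= => /eqP hv.
  move/negP: vn0; apply; apply/eqP/matrixP => a b.
  rewrite (ord1 a) mxE; have := hcst b i0; rewrite !mxE => ->; by rewrite hv.
set N := invmx M.
have NM : N *m M = 1%:M by exact: mulVmx.
have MN : M *m N = 1%:M by exact: mulmxV.
have NJ : N *m J = J by rewrite -{1}MJ mulmxA NM mul1mx.
have JN : J *m N = J by rewrite -{1}JM -mulmxA MN mulmx1.
have LM : L = M - j *: J by rewrite /M addrK.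
set X := N - j *: J.
set K : 'M[R]_n := 1%:M - j *: J.
have LX : L *m X = K.
  by rewrite /X mulmxBr -scalemxAr LJ scaler0 subr0 LM mulmxBl MN -scalemxAl JN.
have XL : X *m L = K.
  by rewrite /X mulmxBl -scalemxAl JL scaler0 subr0 LM mulmxBr NM -scalemxAr NJ.
have KT : K^T = K by rewrite /K linearB /= linearZ /= trmx1 trmx_const.
have KL : K *m L = L by rewrite /K mulmxBl mul1mx -scalemxAl JL scaler0 subr0.
have JX : J *m X = 0.
  by rewrite /X mulmxBr JN -scalemxAr JJ' scalerA jn scale1r subrr.
have KX : K *m X = X by rewrite /K mulmxBl mul1mx -scalemxAl JX scaler0 subr0.
exists X; split.
- by rewrite LX KL.
- by rewrite XL KX.
- by rewrite LX KT.
- by rewrite XL KT.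
Qed.
Lemma bTx (R : ringType) n (u v : 'I_n) (x : 'cV[R]_n) :
  ((basis_vec R u - basis_vec R v)^T *m x) 0 0 = x u 0 - x v 0.
Proof. rewrite mxE; under eq_bigr => i _ do rewrite !mxE mulrBl. by rewrite sumrB !sum_pick. Qed.

Theorem theorem2 (R : realFieldType) (n m : nat)
  (src dst : 'I_m.+1 -> 'I_n) (wt : 'I_m.+1 -> R) (k0 : 'I_m.+1) :
  simple_graph src dst ->
  wt k0 < 0 ->
  (forall k, k != k0 -> 0 < wt k) ->
  connected_graph (fun j => src (lift k0 j)) (fun j => dst (lift k0 j)) ->
  psd (laplacian src dst wt) <->
  `|wt k0| <= (eff_res (fun j => src (lift k0 j)) (fun j => dst (lift k0 j))
                       (fun j => wt (lift k0 j)) (src k0) (dst k0))^-1.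
Proof.
move=> [hsd _] hneg hpos hc.
pose s' := fun j => src (lift k0 j).
pose d' := fun j => dst (lift k0 j).
pose w' := fun j => wt (lift k0 j).
have hw' : forall j, 0 < w' j by move=> j; apply: hpos; rewrite eq_sym neq_lift.
have n0 : (0 < n)%N := leq_ltn_trans (leq0n _) (ltn_ord (src k0)).
pose A := laplacian s' d' w'.
have [X hX] := MP_exists n0 hw' hc.
have hP : is_MP_inverse A (pinv A) :=
  epsilon_spec (inhabits A) (is_MP_inverse A) (ex_intro _ X hX).
pose P := pinv A.
case: hP => h1 _ h2 _.
pose u := src k0. pose v := dst k0.
pose b := basis_vec R u - basis_vec R v.
have AAP : A *m (A *m P) = A.
  have : (A *m P *m A)^T = A by rewrite h1 /A lap_sym.
  by rewrite trmx_mul h2 /A lap_sym.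
pose z := b - A *m (P *m b).
have Az : A *m z = 0 by rewrite mulmxBr (mulmxA A P b) (mulmxA A (A *m P) b) AAP subrr.
have hz : forall i j, z i 0 = z j 0.
  apply: (const_conn hc); apply: (Bq_eq0 hw').
  by rewrite -bil -mulmxA Az mulmx0 mxE.
have zz : (z^T *m z) 0 0 = 0.
  rewrite {2}/z mulmxBr ent_add.
  have -> : z^T *m (A *m (P *m b)) = 0.
    by rewrite mulmxA -[A]lap_sym -trmx_mul Az trmx0 mul0mx.
  rewrite oppr0 [X in _ + X]mxE addr0 -[z^T *m b]trmxK [X in X = _]mxE trmx_mul trmxK bTx.
  by rewrite (hz u v) subrr.
have z0 : z = 0.
  move: zz; rewrite mxE => /psumr_eq0P H.
  have /H Hi : forall i, true -> 0 <= z^T 0 i * z i 0.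
    by move=> i _; rewrite mxE -expr2 sqr_ge0.
  apply/matrixP => i j; rewrite (ord1 j) [RHS]mxE; move: (Hi i isT).
  by rewrite mxE -expr2 => /eqP; rewrite sqrf_eq0 => /eqP.
pose y := P *m b.
have Ay : A *m y = b by apply/eqP; rewrite eq_sym -subr_eq0; apply/eqP.
have Bqy : forall x, Bq s' d' w' y x = x u 0 - x v 0.
  move=> x; rewrite -bil -[y^T *m A]trmxK trmx_mul trmxK /A lap_sym -/A Ay.
  by rewrite bTx.
have hr : eff_res s' d' w' u v = y u 0 - y v 0.
  by rewrite /eff_res -/A -/P -/b -mulmxA bTx.
pose r := y u 0 - y v 0.
have rB : r = Bq s' d' w' y y by rewrite Bqy.
have r0 : 0 < r.
  rewrite lt_def rB (@Bq_ge0 _ _ _ s' d' w' y hw') andbT; apply/negP => /eqP /(Bq_eq0 hw') hd.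
  have := Bqy (basis_vec R u).
  rewrite /Bq big1; last by move=> j _; rewrite hd mul0r mulr0.
  rewrite !mxE eqxx eq_sym (negbTE (hsd k0)) subr0 => /eqP; by rewrite eq_sym oner_eq0.
have full : forall x, (x^T *m laplacian src dst wt *m x) 0 0 =
    wt k0 * (Bq s' d' w' y x * Bq s' d' w' y x) + Bq s' d' w' x x.
  by move=> x; rewrite bil (Bq_split _ _ _ k0) Bqy.
rewrite -/s' -/d' -/w' -/u -/v hr -/r ltr0_norm //.
split.
- move=> hpsd; have := hpsd y; rewrite full -rB => H.
  have H2 : - wt k0 * r <= 1 by nra.
  by rewrite -[r^-1]mul1r ler_pdivlMr.
- move=> hc' x; rewrite full.
  pose be := Bq s' d' w' y x.
  pose t := be / r.
  have H1 := @Bq_ge0 _ _ _ s' d' w' (x - t *: y) hw'.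
  rewrite Bq_expand -rB -/be in H1.
  have tr : t * r = be by rewrite /t divfK // gt_eqF.
  have H3 : - wt k0 * r <= 1 by rewrite -ler_pdivlMr // mul1r.
  have H4 : 0 <= t * t * (1 - (- wt k0) * r) by apply: mulr_ge0; [rewrite -expr2 sqr_ge0 | lra].
  rewrite -/be -tr; nra.
Qed.
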